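(* Assume Assumptions 1 and 2 (stated in the context). If, during an iteration of Algorithm 1 (the feasible interior point method described in the context), the line search returns a positive step size $\alpha$ and $\theta$ is updated to $\theta+d\alpha$, then the updated $\theta$ is a feasible solution of the semi-infinite program, i.e. $\text{dist}(b_i(t,\theta),o)\ge d_0$ for all bodies $i$ and all $t\in[0,T]$.
   Context: Problem. An articulated robot consists of finitely many rigid bodies. For a finite-dimensional trajectory parameter vector $\theta$ and a time $t\in[0,T]$ ($T>0$), the $i$-th body occupies a set $b_i(t,\theta)\subset\mathbb{R}^3$; static obstacles occupy $o\subset\mathbb{R}^3$. $\text{dist}(A,B)$ denotes the shortest Euclidean distance between sets $A,B$. Given a safe distance $d_0\ge 0$ and a twice differentiable cost $\mathcal{O}(\theta)$, the semi-infinite program (SIP) is: minimize $\mathcal{O}(\theta)$ subject to $\text{dist}(b_i(t,\theta),o)\ge d_0$ for all $i$ and all $t\in[0,T]$. A $\theta$ satisfying all constraints is feasible. Assumption 1: there are finite decompositions $b_i(t,\theta)=\bigcup_j b_{ij}(t,\theta)$ and $o=\bigcup_k o_k$ such that for each triple $(i,j,k)$ the function $(t,\theta)\mapsto \text{dist}(b_{ij}(t,\theta),o_k)$ is sufficiently smooth. Assumption 2: the feasible domain of $t$ and $\theta$ is bounded. Under these, there is a constant $L_1$ with $|\text{dist}(b_{ij}(t_1,\theta),o_k)-\text{dist}(b_{ij}(t_2,\theta),o_k)|\le L_1|t_1-t_2|$ for all $i,j,k,t_1,t_2,\theta$; the algorithm uses such an $L_1$. Barrier: $\mathcal{P}$ is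 a sufficiently smooth, monotonically decreasing function on $(0,\infty)$ with $\lim_{x\to0}\mathcal{P}(x)=\infty$, $\lim_{x\to\infty}\mathcal{P}(x)=0$. Set $\mathcal{P}_{ijk}(t,\theta)=\mathcal{P}(\text{dist}(b_{ij}(t,\theta),o_k)-d_0)$. Partitions: for each triple $(i,j,k)$ the algorithm maintains a finite partition of $[0,T]$ into closed intervals $[T_0^l,T_1^l]$ indexed by $l$; ''subdividing'' the term $(i,j,k,l)$ replaces $[T_0^l,T_1^l]$ in the partition of $(i,j,k)$ by $[T_0^l,(T_0^l+T_1^l)/2]$ and $[(T_0^l+T_1^l)/2,T_1^l]$. Define $\mathcal{P}_{ijkl}(\theta)=\mathcal{P}_{ijk}((T_0^l+T_1^l)/2,\theta)$ and, for $\mu>0$, $\mathcal{E}(\theta)=\mathcal{O}(\theta)+\mu\sum_{ijkl}(T_1^l-T_0^l)\mathcal{P}_{ijkl}(\theta)$ (sum over all triples and all intervals of their partitions). Search directions: $d^{(1)}=-\nabla_\theta\mathcal{E}$, or $d^{(2)}=\mathcal{M}(\nabla^2_\theta\mathcal{E})^{-1}d^{(1)}$ where $\mathcal{M}$ satisfies $\underline\beta I\preceq\mathcal{M}(H)\preceq\bar\beta I$ for fixed positive constants $\underline\beta,\bar\beta$. Wolfe condition: $\mathcal{E}(\theta+d\alpha)\le\mathcal{E}(\theta)+c\langle d\alpha,\nabla_\theta\mathcal{E}(\theta)\rangle$ with fixed $c\in(0,1)$. Safety check (Algorithm 2) at $\theta$: with $\psi(x)=L_1x/2+L_2x^\eta$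 ($L_2,\eta>0$ constants), return some tuple $(i,j,k,l)$ with $\text{dist}(b_{ij}((T_0^l+T_1^l)/2,\theta),o_k)\le d_0+\psi(T_1^l-T_0^l)$ if one exists, else return None (''$\theta$ passes the safety check''). Line-Search($\theta,d,\epsilon_\alpha$) (Algorithm 3), with constants $\alpha_0>0,\gamma\in(0,1)$: set $\alpha=\alpha_0$, $\theta'=\theta+d\alpha$; while $\theta'$ fails the safety check or violates the Wolfe condition: if the safety check returned a tuple $(i,j,k,l)$, then if $\alpha\le\epsilon_\alpha$ set $\epsilon_\alpha\leftarrow\gamma\epsilon_\alpha$, subdivide $(i,j,k,l)$, re-evaluate $\mathcal{E}$ and recompute $d$ (as $d^{(1)}$ or $d^{(2)}$), otherwise set $\alpha\leftarrow\gamma\alpha$; if only the Wolfe condition fails set $\alpha\leftarrow\gamma\alpha$; then update $\theta'=\theta+d\alpha$ and re-run the safety check. Return $\alpha,\epsilon_\alpha$. Algorithm 1: input a feasible $\theta$, initial $\mu$, $\epsilon_\alpha,\epsilon_d,\epsilon_\mu>0$, $\gamma\in(0,1)$. While $\mu>\epsilon_\mu$: compute $d$; while $\|d\|_\infty>\epsilon_d$: $(\alpha,\epsilon_\alpha)\leftarrow$ Line-Search$(\theta,d,\epsilon_\alpha)$, $\theta\leftarrow\theta+d\alpha$, recompute $d$; then $\mu\leftarrow\gamma\mu$. Return $\theta$. *)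

(* Defs.v *)
From HB Require Import structures.
From mathcomp Require Import all_boot all_order all_algebra.
From mathcomp Require Import all_classical all_reals all_analysis.
From Stdlib Require Import Relations.
Set Implicit Arguments. Unset Strict Implicit. Unset Printing Implicit Defensive.
Import Order.TTheory GRing.Theory Num.Theory.
Local Open Scope classical_set_scope.
Local Open Scope ring_scope.

Section SIP.
Variable R : realType.

Definition edist (a b : 'rV[R]_3) : R :=
  Num.sqrt (\sum_(i < 3) (a ord0 i - b ord0 i) ^+ 2).

(* Shortest Euclidean distance between two sets (infimum, +oo if a set is empty). *)
Definition set_dist (A B : set 'rV[R]_3) : \bar R :=
  ereal_inf [set (edist x.1 x.2)%:E | x in A `*` B].

Variables (n nb no : nat) (nj : 'I_nb -> nat).

(* index of a body piece b_ij : a pair (i, j) with j < nj i *)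
Definition pidx := {i : 'I_nb & 'I_(nj i)}.

Definition feasible (body : 'I_nb -> R -> 'rV[R]_n -> set 'rV[R]_3)
  (obst : set 'rV[R]_3) (d0 T : R) (th : 'rV[R]_n) : Prop :=
  forall (i : 'I_nb) (t : R), 0 <= t <= T -> (d0%:E <= set_dist (body i t th) obst)%E.

(* s is a finite partition of [x, y] into consecutive closed intervals *)
Fixpoint chain (x y : R) (s : seq (R * R)) : Prop :=
  match s with
  | [::] => x = y
  | iv :: s' => iv.1 = x /\ iv.1 <= iv.2 /\ chain iv.2 y s'
  end.
Definition is_partition (T : R) (s : seq (R * R)) : Prop := chain 0 T s.

(* partitions of [0,T], one for each triple (i,j,k) *)
Definition Part := pidx -> 'I_no -> seq (R * R).

Definition midp (I : R * R) : R := (I.1 + I.2) / 2.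

Definition psi (L1 L2 eta x : R) : R := L1 * x / 2 + L2 * x `^ eta.

Variables (pieces : pidx -> R -> 'rV[R]_n -> set 'rV[R]_3)
          (obs : 'I_no -> set 'rV[R]_3) (d0 L1 L2 eta : R).

(* the tuple (i,j,k,l) fails the safety test of Algorithm 2 at theta *)
Definition unsafe (p : Part) (th : 'rV[R]_n) (s : pidx) (k : 'I_no) (l : nat) : Prop :=
  (l < size (p s k))%N /\
  let I := nth (0, 0) (p s k) l in
  (set_dist (pieces s (midp I) th) (obs k) <= (d0 + psi L1 L2 eta (I.2 - I.1))%:E)%E.

(* theta passes the safety check (Algorithm 2 returns None) *)
Definition passes_safety (p : Part) (th : 'rV[R]_n) : Prop :=
  forall s k l, ~ unsafe p th s k l.

Definition subdivide (p : Part) (s : pidx) (k : 'I_no) (l : nat) : Part :=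
  fun s' k' =>
    if (s' == s) && (k' == k) then
      let J := p s k in
      let I := nth (0, 0) J l in
      take l J ++ [:: (I.1, midp I); (midp I, I.2)] ++ drop l.+1 J
    else p s' k'.

Record ls_state := LS { ls_alpha : R; ls_eps : R; ls_part : Part; ls_dir : 'rV[R]_n }.

Variables (gamma : R)
  (* recomputation of the direction d (d^(1) or d^(2)) for given partitions *)
  (dir : Part -> 'rV[R]_n)
  (* wolfe p d a : theta + d a satisfies the Wolfe condition for the E built on p *)
  (wolfe : Part -> 'rV[R]_n -> R -> Prop)
  (th : 'rV[R]_n).

(* one iteration of the while loop of Line-Search (Algorithm 3) *)
Definition ls_step (st st' : ls_state) : Prop :=
  let: LS a e p d := st in
  let th' := th + a *: d in
  (exists s k l, unsafe p th' s k l /\ a <= e /\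
     st' = LS a (gamma * e) (subdivide p s k l) (dir (subdivide p s k l)))
  \/ ((exists s k l, unsafe p th' s k l) /\ e < a /\ st' = LS (gamma * a) e p d)
  \/ (passes_safety p th' /\ ~ wolfe p d a /\ st' = LS (gamma * a) e p d).

Definition ls_returns (st0 st : ls_state) : Prop :=
  clos_refl_trans ls_state ls_step st0 st /\
  passes_safety (ls_part st) (th + ls_alpha st *: ls_dir st) /\
  wolfe (ls_part st) (ls_dir st) (ls_alpha st).

End SIP.

(* Main.v *)
Require Import Defs.
From HB Require Import structures.
From mathcomp Require Import all_boot all_order all_algebra.
From mathcomp Require Import all_classical all_reals all_analysis.
From mathcomp Require Import lra.
From Stdlib Require Import Relations.
Import Order.TTheory GRing.Theory Num.Theory.
Local Open Scope classical_set_scope.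
Local Open Scope ring_scope.

Lemma chain_sub (R : realType) (J : seq (R * R)) (x y : R) (l : nat) :
  chain x y J -> (l < size J)%N ->
  chain x y (take l J ++ [:: ((nth (0, 0) J l).1, midp (nth (0, 0) J l));
                             (midp (nth (0, 0) J l), (nth (0, 0) J l).2)]
             ++ drop l.+1 J).
Proof.
elim: J x l => [|iv J IH] x [|l] //= [h1 [h2 h3]] hl.
- rewrite drop0; split=> //; split; first by rewrite /midp; lra.
  by split=> //; split=> //; rewrite /midp; lra.
- by split=> //; split=> //; apply: IH.
Qed.

Lemma chain_cover (R : realType) (J : seq (R * R)) (x y t : R) :
  chain x y J -> x <= t <= y -> J <> [::] ->
  exists l, (l < size J)%N /\ x <= (nth (0,0) J l).1 /\
    (nth (0,0) J l).1 <= t <= (nth (0,0) J l).2 /\ (nth (0,0) J l).2 <= y.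
Proof.
have chle : forall (J : seq (R * R)) x y, chain x y J -> x <= y.
  elim=> [|iv J' IH] x' y' /=; first by move=> ->.
  by move=> [h1 [h2 /IH h3]]; lra.
elim: J x => [|iv J IH] x //= [h1 [h2 h3]] /andP[ht1 ht2] _.
have [hle|hgt] := leP t iv.2.
  exists 0%N; split=> //=; split; first by lra.
  by split; [apply/andP; split; lra | apply: (chle _ _ _ h3)].
case: J IH h3 => [|iv' J'] IH h3.
  by move: h3 => /= h3; lra.
have [l [hl [a [b c]]]] := IH iv.2 h3 (ltac:(apply/andP; split; lra)) ltac:(by []).
exists l.+1; split=> //; split=> //; lra.
Qed.

Theorem theorem1 (R : realType) (n nb no : nat) (nj : 'I_nb -> nat)
  (T d0 L1 L2 eta alpha0 gamma eps0 : R)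
  (body : 'I_nb -> R -> 'rV[R]_n -> set 'rV[R]_3)
  (pieces : pidx nj -> R -> 'rV[R]_n -> set 'rV[R]_3)
  (obst : set 'rV[R]_3) (obs : 'I_no -> set 'rV[R]_3)
  (D : pidx nj -> 'I_no -> R -> 'rV[R]_n -> R)
  (dir : Part R no nj -> 'rV[R]_n) (wolfe : Part R no nj -> 'rV[R]_n -> R -> Prop)
  (th d : 'rV[R]_n) (p0 : Part R no nj) (st : ls_state R n no nj) :
  0 < T -> 0 <= d0 -> 0 < L2 -> 0 < eta -> 0 < alpha0 -> 0 < gamma < 1 -> 0 < eps0 ->
  (* Assumption 1: finite decompositions with real-valued piecewise distances *)
  (forall (i : 'I_nb) t x, body i t x = \bigcup_(j in [set: 'I_(nj i)]) pieces (existT _ i j) t x) ->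
  obst = \bigcup_(k in [set: 'I_no]) obs k ->
  (forall s k t x, set_dist (pieces s t x) (obs k) = (D s k t x)%:E) ->
  (* the Lipschitz constant L1 in t *)
  (forall s k x t1 t2, 0 <= t1 <= T -> 0 <= t2 <= T ->
     `|D s k t1 x - D s k t2 x| <= L1 * `|t1 - t2|) ->
  (* the partitions maintained by Algorithm 1 are partitions of [0,T] *)
  (forall s k, is_partition T (p0 s k)) ->
  (* Line-Search(theta, d, eps0) returns a positive alpha (final state st) *)
  ls_returns pieces obs d0 L1 L2 eta gamma dir wolfe th (LS alpha0 eps0 p0 d) st ->
  0 < ls_alpha st ->
  feasible body obst d0 T (th + ls_alpha st *: ls_dir st).
Proof.
move=> hT hd0 hL2 heta _ _ _ hbody hobst hD hLip hp0 [hrt [hsafe _]] _.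
have hinv : forall s k, is_partition T (ls_part st s k).
  move: hrt; set st0 := LS _ _ _ _.
  have : forall s k, is_partition T (ls_part st0 s k) by [].
  move=> H0 hrt; elim: hrt H0 => //.
  - move=> [a e p dd] st' hstep /= Hp.
    move: hstep; rewrite /ls_step /=.
    case.
      move=> [s [k [l [[hl _] [_ E]]]]]; rewrite E /=; move=> s' k'.
      rewrite /subdivide; case: ifP => [_|_]; last exact: Hp.
      exact: chain_sub (Hp s k) hl.
    case; move=> [_ [_ E]]; rewrite E /=; exact: Hp.
  - by move=> x y z _ IH1 _ IH2 H; apply: IH2; apply: IH1.
set th' := th + _ *: _.
set p := ls_part st.
have key : forall s k t, 0 <= t <= T -> d0 <= D s k t th'.
  move=> s k t ht.
  have L1ge0 : 0 <= L1.
    have := hLip s k th' 0 T (ltac:(apply/andP; split; lra)) (ltac:(apply/andP; split; lra)).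
    rewrite sub0r normrN (gtr0_norm hT) => h.
    have := normr_ge0 (D s k 0 th' - D s k T th'); nra.
  have hne : p s k <> [::] by move=> E; have := hinv s k; rewrite -/p E /is_partition /=; lra.
  have [l [hl [a [/andP[b1 b2] c]]]] := @chain_cover _ _ _ _ _ (hinv s k) ht hne.
  set I := nth (0,0) (p s k) l in a b1 b2 c.
  have hu : ~ unsafe pieces obs d0 L1 L2 eta p th' s k l := hsafe s k l.
  have hmid : (d0 + psi L1 L2 eta (I.2 - I.1) < D s k (midp I) th').
    rewrite ltNge; apply/negP => h; apply: hu; split=> //.
    by cbv zeta; rewrite hD lee_fin.
  have hm : 0 <= midp I <= T by apply/andP; rewrite /midp; split; lra.
  have hL := hLip s k th' (midp I) t hm ht.
  have hpw := powR_ge0 (I.2 - I.1) eta.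
  have hab : `|midp I - t| <= (I.2 - I.1) / 2.
    rewrite /midp ler_norml; apply/andP; split; lra.
  have h1 : L1 * `|midp I - t| <= L1 * ((I.2 - I.1) / 2) by nra.
  move: hmid; rewrite /psi => hmid.
  have := ler_norml (D s k (midp I) th' - D s k t th') (L1 * `|midp I - t|).
  rewrite hL => /esym/andP[h2 h3].
  have : 0 <= L2 * (I.2 - I.1) `^ eta by nra.
  lra.
move=> i t ht.
rewrite hbody hobst; apply/ereal_infP => z [[x y] [[j _ hx] [k _ hy]] <-].
apply: (le_trans (y := set_dist (pieces (existT _ i j) t th') (obs k))).
  by rewrite hD lee_fin; apply: key.
apply: ge_ereal_inf; exists (Defs.edist x y)%:E.
  exists (x, y); [by split | reflexivity].
exact: lexx.
Qed.
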